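(* For discrete models over $K$ timesteps, assuming that $\theta^\star_{Tt}>0$ and $\theta^\star_{Ct}>0$ for all $t$, the solution $(\theta_{T}^\star, \theta_{C}^\star)$ is the only stationary point of the multi-player inverse-weighted Brier score game for times $t \in \{1,\ldots,K-1\}$. This game has $2(K-1)$ players: for each $t \in \{1,\ldots,K-1\}$, the $t$-th failure player controls only $\theta_{Tt}$ and minimizes $\ell_F^t(\theta)$, and the $t$-th censor player controls only $\theta_{Ct}$ and minimizes $\ell_G^t(\theta)$. Here $$\ell_{F}^t(\theta)=\mathbb{E}\Big[\frac{\overline{F}_{\theta_T}(t)^2\,\Delta\,\mathbb{1}\{U \leq t\}}{\overline{G}_{\theta_C}(U^{-})}+\frac{F_{\theta_T}(t)^2\,\mathbb{1}\{U > t\}}{\overline{G}_{\theta_C}(t)}\Big],$$ $$\ell_{G}^t(\theta)=\mathbb{E}\Big[\frac{\overline{G}_{\theta_C}(t)^2\,(1-\Delta)\,\mathbb{1}\{U \leq t\}}{\overline{F}_{\theta_T}(U)}+\frac{G_{\theta_C}(t)^2\,\mathbb{1}\{U > t\}}{\overline{F}_{\theta_T}(t)}\Big].$$ A stationary point is a $(\theta_T,\theta_C)$ at which $\partial \ell_F^t/\partial \theta_{Tt}=0$ and $\partial \ell_G^t/\partial \theta_{Ct}=0$ for all $t \in \{1,\ldots,K-1\}$.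
   Context: Let $T$ be a failure time and $C$ a censoring time, both taking values in discrete times $\{1,\ldots,K\}$, with $T$ independent of $C$ (marginal models, no covariates). One observes $U=\min(T,C)$ and $\Delta=\mathbb{1}\{T \leq C\}$; expectations are over the true data-generating distribution of $(T,C)$. The failure model has parameters $\theta_T=(\theta_{T1},\ldots,\theta_{T(K-1)})$ with $\theta_{Tt}=P_\theta(T=t)$, $\theta_{TK}=1-\sum_{t<K}\theta_{Tt}$, CDF $F_{\theta_T}(t)=\sum_{k=1}^t \theta_{Tk}$ and survival function $\overline{F}_{\theta_T}=1-F_{\theta_T}$; likewise the censoring model has $\theta_{Ct}=P_\theta(C=t)$, CDF $G_{\theta_C}$, $\overline{G}_{\theta_C}=1-G_{\theta_C}$, and $\overline{G}_{\theta_C}(t^-)=P_\theta(C\geq t)$. $\theta^\star_T,\theta^\star_C$ denote the parameters of the true failure and censoring distributions. The losses are inverse-probability-of-censoring-weighted Brier scores at time $t$ where the true weighting distribution is replaced by the other player's model. *)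

(* Defs.v *)
From Stdlib Require Import Reals.
From Coquelicot Require Import Coquelicot.
Open Scope R_scope.

Fixpoint sumR (f : nat -> R) (n : nat) : R :=
  match n with
  | O => 0
  | S m => sumR f m + f (S m)
  end.

(* A parameter vector th : nat -> R; only th 1, ..., th (K-1) are used.
   pmf K th k = P_theta(T = k) for k in {1..K}; the last mass is 1 - sum. *)
Definition pmf (K : nat) (th : nat -> R) (k : nat) : R :=
  if Nat.ltb k K then th k else 1 - sumR th (K - 1).

Definition cdf (K : nat) (th : nat -> R) (t : nat) : R :=
  sumR (pmf K th) t.

Definition surv (K : nat) (th : nat -> R) (t : nat) : R := 1 - cdf K th t.

(* left-limit survival Fbar(t^-) = P(T >= t) = 1 - F(t-1) *)
Definition survm (K : nat) (th : nat -> R) (t : nat) : R := 1 - cdf K th (t - 1).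

Definition ind (b : bool) : R := if b then 1 else 0.

(* Expectation of g(U, Delta) under the true independent (T, C) with
   parameters thTs, thCs; U = min T C, Delta = 1{T <= C}. *)
Definition Etrue (K : nat) (thTs thCs : nat -> R) (g : nat -> bool -> R) : R :=
  sumR (fun i => sumR (fun j =>
     pmf K thTs i * pmf K thCs j * g (Nat.min i j) (Nat.leb i j)) K) K.

Definition lossF (K : nat) (thTs thCs : nat -> R) (t : nat)
    (thT thC : nat -> R) : R :=
  Etrue K thTs thCs (fun u d =>
      (surv K thT t) ^ 2 * ind d * ind (Nat.leb u t) / survm K thC u
    + (cdf K thT t) ^ 2 * ind (Nat.ltb t u) / surv K thC t).

Definition lossG (K : nat) (thTs thCs : nat -> R) (t : nat)
    (thT thC : nat -> R) : R :=
  Etrue K thTs thCs (fun u d =>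
      (surv K thC t) ^ 2 * (1 - ind d) * ind (Nat.leb u t) / surv K thT u
    + (cdf K thC t) ^ 2 * ind (Nat.ltb t u) / surv K thT t).

Definition upd (th : nat -> R) (t : nat) (x : R) : nat -> R :=
  fun k => if Nat.eqb k t then x else th k.

(* valid model parameters: a probability distribution on {1..K} whose
   last mass is positive (so that all weights in the losses are positive) *)
Definition valid (K : nat) (th : nat -> R) : Prop :=
  (forall k, (1 <= k <= K - 1)%nat -> 0 <= th k) /\ 0 < pmf K th K.

Definition stationary (K : nat) (thTs thCs : nat -> R) (thT thC : nat -> R) : Prop :=
  forall t, (1 <= t <= K - 1)%nat ->
    is_derive (fun x => lossF K thTs thCs t (upd thT t x) thC) (thT t) 0 /\
    is_derive (fun x => lossG K thTs thCs t thT (upd thC t x)) (thC t) 0.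

(* Main.v *)
Require Import Defs.
From Stdlib Require Import Reals Lra Lia.
From Coquelicot Require Import Coquelicot.
Open Scope R_scope.
Notation ind := Defs.ind.

Lemma sumR_ext f g n : (forall k, (1<=k<=n)%nat -> f k = g k) -> sumR f n = sumR g n.
Proof. induction n; simpl; intros H; auto. rewrite IHn by (intros; apply H; lia). rewrite H by lia. auto. Qed.

Lemma sumR_plus f g n : sumR (fun k => f k + g k) n = sumR f n + sumR g n.
Proof. induction n; cbn [sumR]; [lra|]. rewrite IHn. lra. Qed.

Lemma sumR_scal c f n : sumR (fun k => c * f k) n = c * sumR f n.
Proof. induction n; cbn [sumR]; [lra|]. rewrite IHn. lra. Qed.

Lemma sumR_swap (h : nat -> nat -> R) n m :
  sumR (fun i => sumR (fun j => h i j) m) n = sumR (fun j => sumR (fun i => h i j) n) m.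
Proof.
  revert m; induction n; intros m; simpl.
  - induction m; simpl; [lra|]. rewrite <- IHm; lra.
  - rewrite IHn. rewrite <- sumR_plus. reflexivity.
Qed.

Lemma sumR_le_ind f t n : sumR (fun k => f k * ind (Nat.leb k t)) n = sumR f (Nat.min n t).
Proof.
  induction n; cbn [sumR]; [reflexivity|]. rewrite IHn.
  destruct (Nat.leb_spec (S n) t); unfold ind.
  - replace (Nat.min n t) with n by lia. replace (Nat.min (S n) t) with (S n) by lia. cbn [sumR]; lra.
  - replace (Nat.min n t) with t by lia. replace (Nat.min (S n) t) with t by lia. lra.
Qed.

Lemma sumR_lt_ind f t n : sumR (fun k => f k * ind (Nat.ltb t k)) n = sumR f n - sumR f (Nat.min n t).
Proof.
  induction n; cbn [sumR]; [simpl; lra|]. rewrite IHn.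
  destruct (Nat.ltb_spec t (S n)); unfold ind.
  - replace (Nat.min n t) with t by lia. replace (Nat.min (S n) t) with t by lia. lra.
  - replace (Nat.min n t) with n by lia. replace (Nat.min (S n) t) with (S n) by lia. cbn [sumR]; lra.
Qed.

Lemma sumR_nonneg f n : (forall k, (1<=k<=n)%nat -> 0 <= f k) -> 0 <= sumR f n.
Proof. induction n; simpl; intros H; [lra|]. assert (0 <= f (S n)) by (apply H; lia).
  assert (0 <= sumR f n) by (apply IHn; intros; apply H; lia). lra. Qed.

Lemma sumR_pos f n : (forall k, (1<=k<=n)%nat -> 0 < f k) -> (1 <= n)%nat -> 0 < sumR f n.
Proof. destruct n; intros H Hn; [lia|]. simpl.
  assert (0 < f (S n)) by (apply H; lia).
  assert (0 <= sumR f n) by (apply sumR_nonneg; intros; left; apply H; lia). lra. Qed.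

Lemma tail_ge f m d : (forall k, (m < k <= m + S d)%nat -> 0 <= f k) ->
  sumR f (m + S d)%nat - sumR f m >= f (m + S d)%nat.
Proof.
  induction d; intros H.
  - rewrite Nat.add_1_r. simpl. lra.
  - rewrite Nat.add_succ_r. simpl sumR.
    assert (0 <= f (m + S d)%nat) by (apply H; lia).
    assert (sumR f (m + S d)%nat - sumR f m >= f (m + S d)%nat) by (apply IHd; intros; apply H; lia).
    lra.
Qed.

Lemma cdf_lt K th t : (t < K)%nat -> cdf K th t = sumR th t.
Proof. intros H. unfold cdf. apply sumR_ext. intros k Hk. unfold pmf.
  replace (Nat.ltb k K) with true; auto. symmetry; apply Nat.ltb_lt; lia. Qed.

Lemma cdf_S K th t : cdf K th (S t) = cdf K th t + pmf K th (S t).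
Proof. reflexivity. Qed.

Lemma cdf_K K th : (1 <= K)%nat -> cdf K th K = 1.
Proof. intros H. destruct K as [|K']; [lia|]. rewrite cdf_S.
  rewrite (cdf_lt (S K') th K') by lia. unfold pmf at 1. rewrite Nat.ltb_irrefl.
  replace (S K' - 1)%nat with K' by lia. lra. Qed.


Lemma surv_pos K th s : (1 <= K)%nat -> (forall k, (1<=k<=K-1)%nat -> 0 <= pmf K th k) ->
  0 < pmf K th K -> (s < K)%nat -> 0 < surv K th s.
Proof.
  intros HK Hn Hp Hs. unfold surv. rewrite <- (cdf_K K th HK).
  destruct (K - s)%nat as [|d] eqn:E; [lia|].
  replace K with (s + S (d))%nat at 1 3 by lia. unfold cdf.
  assert (sumR (pmf K th) (s + S d) - sumR (pmf K th) s >= pmf K th (s + S d)).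
  { apply tail_ge. intros k Hk. destruct (Nat.eq_dec k K). subst; lra. apply Hn; lia. }
  replace (s + S d)%nat with K in * by lia. lra.
Qed.
Lemma alg FT GC Fs c g : 0 < 1-FT -> 0 < 1-GC -> 0 < 1-Fs -> 0 < Fs -> 0 < 1-(c+g) -> 0<g -> 0<=c ->
  0 = -2*(1-FT)*Fs + 2*FT*((1-Fs)*(1-(c+g))/(1-GC)) ->
  0 = -2*(1-GC)*(c + g*(1-Fs)/(1-FT)) + 2*GC*((1-Fs)*(1-(c+g))/(1-FT)) ->
  FT = Fs /\ GC = c+g.
Proof.
  intros x0 y0 a0 a1 b0 g0 c0 EF EG.
  assert (E1 : FT*(1-Fs)*(1-(c+g)) - (1-FT)*Fs*(1-GC) = 0).
  { replace (FT*(1-Fs)*(1-(c+g)) - (1-FT)*Fs*(1-GC)) with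
      ((1-GC)/2 * (-2*(1-FT)*Fs + 2*FT*((1-Fs)*(1-(c+g))/(1-GC)))) by (field; lra).
    rewrite <- EF. ring. }
  assert (E2 : GC*(1-Fs)*(1-(c+g)) - (1-GC)*(c*(1-FT) + g*(1-Fs)) = 0).
  { replace (GC*(1-Fs)*(1-(c+g)) - (1-GC)*(c*(1-FT) + g*(1-Fs))) with
      ((1-FT)/2 * (-2*(1-GC)*(c + g*(1-Fs)/(1-FT)) + 2*GC*((1-Fs)*(1-(c+g))/(1-FT)))) by (field; lra).
    rewrite <- EG. ring. }
  assert (P : ((1-Fs)*(1-(c+g))) * (((1-FT)-(1-Fs))*(c*(1-FT)+g+(1-(c+g)))) = 0).
  { replace (((1-Fs)*(1-(c+g))) * (((1-FT)-(1-Fs))*(c*(1-FT)+g+(1-(c+g))))) with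
      (-(c*(1-FT)+g*(1-Fs)+(1-Fs)*(1-(c+g)))*(FT*(1-Fs)*(1-(c+g)) - (1-FT)*Fs*(1-GC))
       + (1-FT)*(1-(1-Fs))*(GC*(1-Fs)*(1-(c+g)) - (1-GC)*(c*(1-FT) + g*(1-Fs)))) by ring.
    rewrite E1, E2. ring. }
  apply Rmult_integral in P. destruct P as [P|P].
  { apply Rmult_integral in P. destruct P; lra. }
  apply Rmult_integral in P. destruct P as [P|P]; [|nra].
  assert (FT = Fs) by lra. subst FT.
  split; auto.
  assert (Q : (1-Fs)*Fs*((1-GC) - (1-(c+g))) = 0).
  { replace ((1-Fs)*Fs*((1-GC) - (1-(c+g)))) with (-(Fs*(1-Fs)*(1-(c+g)) - (1-Fs)*Fs*(1-GC))) by ring.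
    rewrite E1. ring. }
  apply Rmult_integral in Q. destruct Q as [Q|Q]; [apply Rmult_integral in Q; destruct Q; lra| lra].
Qed.
Lemma ind_t : ind true = 1. Proof. reflexivity. Qed.
Lemma ind_f : ind false = 0. Proof. reflexivity. Qed.
Lemma Etrue_lin K a b (c1 c2 : R) h1 h2 :
  Etrue K a b (fun u d => c1 * h1 u d + c2 * h2 u d) =
  c1 * Etrue K a b h1 + c2 * Etrue K a b h2.
Proof.
  unfold Etrue. rewrite <- !sumR_scal, <- sumR_plus. apply sumR_ext; intros i _.
  rewrite <- !sumR_scal, <- sumR_plus. apply sumR_ext; intros j _. ring.
Qed.

Lemma E1 K thTs thCs t : (1 <= K)%nat -> (t <= K)%nat ->
  Etrue K thTs thCs (fun u d => ind (Nat.ltb t u)) = surv K thTs t * surv K thCs t.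
Proof.
  intros HK Ht. unfold Etrue.
  transitivity (sumR (fun i => sumR (fun j => pmf K thCs j * ind (Nat.ltb t j)) K
      * (pmf K thTs i * ind (Nat.ltb t i))) K).
  { apply sumR_ext; intros i Hi. rewrite Rmult_comm, <- sumR_scal. apply sumR_ext; intros j Hj.
    destruct (Nat.ltb_spec t i), (Nat.ltb_spec t j), (Nat.ltb_spec t (Nat.min i j));
    rewrite ?ind_t, ?ind_f; unfold Rdiv; try ring; lia. }
  rewrite sumR_scal, !sumR_lt_ind. replace (Nat.min K t) with t by lia.
  unfold surv. fold (cdf K thTs K) (cdf K thCs K) (cdf K thTs t) (cdf K thCs t).
  rewrite !cdf_K by lia. ring.
Qed.

Lemma E2 K thTs thCs thC t : (1 <= K)%nat -> (t <= K)%nat ->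
  Etrue K thTs thCs (fun u d => ind d * ind (Nat.leb u t) / survm K thC u) =
  sumR (fun i => pmf K thTs i * survm K thCs i / survm K thC i) t.
Proof.
  intros HK Ht. unfold Etrue.
  transitivity (sumR (fun i => (pmf K thTs i * ind (Nat.leb i t) / survm K thC i) *
     sumR (fun j => pmf K thCs j * ind (Nat.ltb (i - 1) j)) K) K).
  { apply sumR_ext; intros i Hi. rewrite <- sumR_scal. apply sumR_ext; intros j Hj.
    destruct (Nat.leb_spec i j).
    - rewrite Nat.min_l by lia. destruct (Nat.ltb_spec (i-1) j); [|lia]. rewrite ?ind_t, ?ind_f; unfold Rdiv; ring.
    - destruct (Nat.ltb_spec (i-1) j); [lia|]. rewrite ?ind_t, ?ind_f; unfold Rdiv; ring. }
  transitivity (sumR (fun i => (pmf K thTs i * survm K thCs i / survm K thC i) * ind (Nat.leb i t)) K).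
  { apply sumR_ext; intros i Hi. rewrite sumR_lt_ind. replace (Nat.min K (i-1)) with (i-1)%nat by lia.
    unfold survm. fold (cdf K thCs K) (cdf K thCs (i-1)). rewrite cdf_K by lia.
    unfold Rdiv. ring. }
  rewrite sumR_le_ind. f_equal. lia.
Qed.

Lemma E3 K thTs thCs thT t : (1 <= K)%nat -> (t <= K)%nat ->
  Etrue K thTs thCs (fun u d => (1 - ind d) * ind (Nat.leb u t) / surv K thT u) =
  sumR (fun j => pmf K thCs j * surv K thTs j / surv K thT j) t.
Proof.
  intros HK Ht. unfold Etrue.
  transitivity (sumR (fun i => sumR (fun j => (pmf K thCs j * ind (Nat.leb j t) / surv K thT j) *
     (pmf K thTs i * ind (Nat.ltb j i))) K) K).
  { apply sumR_ext; intros i Hi. apply sumR_ext; intros j Hj.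
    destruct (Nat.leb_spec i j).
    - destruct (Nat.ltb_spec j i); [lia|]. rewrite ?ind_t, ?ind_f; unfold Rdiv; ring.
    - rewrite Nat.min_r by lia. destruct (Nat.ltb_spec j i); [|lia]. rewrite ?ind_t, ?ind_f; unfold Rdiv; ring. }
  rewrite sumR_swap.
  transitivity (sumR (fun j => (pmf K thCs j * surv K thTs j / surv K thT j) * ind (Nat.leb j t)) K).
  { apply sumR_ext; intros j Hj. rewrite sumR_scal, sumR_lt_ind. replace (Nat.min K j) with j by lia.
    unfold surv. fold (cdf K thTs K) (cdf K thTs j). rewrite cdf_K by lia.
    unfold Rdiv. ring. }
  rewrite sumR_le_ind. f_equal. lia.
Qed.

Lemma lossF_dec K thTs thCs t thT thC :
  lossF K thTs thCs t thT thC =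
  (surv K thT t)^2 * Etrue K thTs thCs (fun u d => ind d * ind (Nat.leb u t) / survm K thC u)
  + ((cdf K thT t)^2 / surv K thC t) * Etrue K thTs thCs (fun u d => ind (Nat.ltb t u)).
Proof.
  unfold lossF. rewrite <- Etrue_lin. unfold Etrue. apply sumR_ext; intros i _.
  apply sumR_ext; intros j _. unfold Rdiv; ring.
Qed.

Lemma lossG_dec K thTs thCs t thT thC :
  lossG K thTs thCs t thT thC =
  (surv K thC t)^2 * Etrue K thTs thCs (fun u d => (1 - ind d) * ind (Nat.leb u t) / surv K thT u)
  + ((cdf K thC t)^2 / surv K thT t) * Etrue K thTs thCs (fun u d => ind (Nat.ltb t u)).
Proof.
  unfold lossG. rewrite <- Etrue_lin. unfold Etrue. apply sumR_ext; intros i _.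
  apply sumR_ext; intros j _. unfold Rdiv; ring.
Qed.

Lemma cdf_upd K th t x : (1 <= t < K)%nat -> cdf K (upd th t x) t = sumR th (t-1) + x.
Proof.
  intros H. rewrite cdf_lt by lia. destruct t as [|t']; [lia|].
  cbn [sumR]. replace (S t' - 1)%nat with t' by lia. f_equal.
  - apply sumR_ext; intros k Hk. unfold upd. destruct (Nat.eqb_spec k (S t')); [lia|auto].
  - unfold upd. rewrite Nat.eqb_refl. auto.
Qed.

Lemma quad_deriv S A B x0 :
  is_derive (fun x => (1 - (S + x))^2 * A + ((S + x)^2) * B) x0
    (-2 * (1 - (S + x0)) * A + 2 * (S + x0) * B).
Proof.
  auto_derive; auto. ring.
Qed.

Lemma derivF K thTs thCs t thT thC x0 : (1 <= t < K)%nat ->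
  is_derive (fun x => lossF K thTs thCs t (upd thT t x) thC) x0
    (-2 * (1 - (sumR thT (t-1) + x0)) * Etrue K thTs thCs (fun u d => ind d * ind (Nat.leb u t) / survm K thC u)
     + 2 * (sumR thT (t-1) + x0) * (Etrue K thTs thCs (fun u d => ind (Nat.ltb t u)) / surv K thC t)).
Proof.
  intros H. eapply is_derive_ext; [|apply quad_deriv].
  intros x. simpl. rewrite lossF_dec. unfold surv. rewrite cdf_upd by auto. unfold Rdiv; ring.
Qed.

Lemma derivG K thTs thCs t thT thC x0 : (1 <= t < K)%nat ->
  is_derive (fun x => lossG K thTs thCs t thT (upd thC t x)) x0
    (-2 * (1 - (sumR thC (t-1) + x0)) * Etrue K thTs thCs (fun u d => (1 - ind d) * ind (Nat.leb u t) / surv K thT u)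
     + 2 * (sumR thC (t-1) + x0) * (Etrue K thTs thCs (fun u d => ind (Nat.ltb t u)) / surv K thT t)).
Proof.
  intros H. eapply is_derive_ext; [|apply quad_deriv].
  intros x. simpl. rewrite lossG_dec. unfold surv. rewrite cdf_upd by auto. unfold Rdiv; ring.
Qed.

Lemma sumR_pred th t : (1 <= t)%nat -> sumR th (t-1) + th t = sumR th t.
Proof. intros H. destruct t; [lia|]. cbn [sumR]. replace (S t - 1)%nat with t by lia. reflexivity. Qed.

Lemma sumR_ratio f v n : (forall i, (1 <= i <= n)%nat -> v i <> 0) ->
  sumR (fun i => f i * v i / v i) n = sumR f n.
Proof. intros H. apply sumR_ext; intros i Hi. field. auto. Qed.

Lemma valid_nn K th : valid K th -> forall k, (1 <= k <= K - 1)%nat -> 0 <= pmf K th k.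
Proof. intros [H _] k Hk. unfold pmf. destruct (Nat.ltb_spec k K); [apply H; lia| lia]. Qed.

Lemma deriv_eq (f : R -> R) (x l1 l2 : R) : is_derive f x l1 -> is_derive f x l2 -> l1 = l2.
Proof. intros H1 H2. rewrite <- (is_derive_unique _ _ _ H1). apply is_derive_unique; auto. Qed.

Theorem proposition2 (K : nat) (thTs thCs : nat -> R) :
  (1 <= K)%nat ->
  (forall t, (1 <= t <= K)%nat -> 0 < pmf K thTs t) ->
  (forall t, (1 <= t <= K)%nat -> 0 < pmf K thCs t) ->
  stationary K thTs thCs thTs thCs /\
  (forall thT thC : nat -> R,
     valid K thT -> valid K thC ->
     stationary K thTs thCs thT thC ->
     forall t, (1 <= t <= K - 1)%nat -> thT t = thTs t /\ thC t = thCs t).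
Proof.
  intros HK HpT HpC.
  assert (svT : forall s, (s < K)%nat -> 0 < surv K thTs s).
  { intros; apply surv_pos; [lia| intros; left; apply HpT; lia | apply HpT; lia | lia]. }
  assert (svC : forall s, (s < K)%nat -> 0 < surv K thCs s).
  { intros; apply surv_pos; [lia| intros; left; apply HpC; lia | apply HpC; lia | lia]. }
  split.
  - intros t Ht. split.
    + assert (D := derivF K thTs thCs t thTs thCs (thTs t) ltac:(lia)).
      rewrite sumR_pred in D by lia. rewrite (E2 K thTs thCs thCs t) in D by lia. rewrite (E1 K thTs thCs t) in D by lia.
      rewrite sumR_ratio in D by (intros i Hi; apply Rgt_not_eq, svC; lia).
      rewrite <- (cdf_lt K thTs t) in D by lia. fold (cdf K thTs t) in D.
      match type of D with is_derive _ _ ?l => replace l with 0 in D end; auto.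
      assert (0 < surv K thCs t) by (apply svC; lia). unfold surv in *. field. lra.
    + assert (D := derivG K thTs thCs t thTs thCs (thCs t) ltac:(lia)).
      rewrite sumR_pred in D by lia. rewrite (E3 K thTs thCs thTs t) in D by lia. rewrite (E1 K thTs thCs t) in D by lia.
      rewrite sumR_ratio in D by (intros i Hi; apply Rgt_not_eq, svT; lia).
      rewrite <- (cdf_lt K thCs t) in D by lia. fold (cdf K thCs t) in D.
      match type of D with is_derive _ _ ?l => replace l with 0 in D end; auto.
      assert (0 < surv K thTs t) by (apply svT; lia). unfold surv in *. field. lra.
  - intros thT thC vT vC Hst.
    assert (svT' : forall s, (s < K)%nat -> 0 < surv K thT s).
    { intros; apply surv_pos; [lia| apply valid_nn; auto | apply vT | lia]. }
    assert (svC' : forall s, (s < K)%nat -> 0 < surv K thC s).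
    { intros; apply surv_pos; [lia| apply valid_nn; auto | apply vC | lia]. }
    assert (Main : forall t, (t <= K - 1)%nat -> forall s, (s <= t)%nat ->
               cdf K thT s = cdf K thTs s /\ cdf K thC s = cdf K thCs s).
    { induction t as [|t IH]; intros Ht s Hs.
      - replace s with 0%nat by lia. split; reflexivity.
      - destruct (Nat.le_gt_cases s t) as [Hst'|Hst']; [apply IH; lia|].
        replace s with (S t) by lia. clear s Hs Hst'.
        destruct (Hst (S t) ltac:(lia)) as [DF DG].
        assert (DF' := derivF K thTs thCs (S t) thT thC (thT (S t)) ltac:(lia)).
        assert (DG' := derivG K thTs thCs (S t) thT thC (thC (S t)) ltac:(lia)).
        assert (EF := deriv_eq _ _ _ _ DF DF'). assert (EG := deriv_eq _ _ _ _ DG DG').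
        clear DF DG DF' DG'.
        rewrite sumR_pred in EF, EG by lia.
        rewrite <- (cdf_lt K thT (S t)) in EF by lia. rewrite <- (cdf_lt K thC (S t)) in EG by lia.
        rewrite (E2 K thTs thCs thC (S t)) in EF by lia. rewrite (E1 K thTs thCs (S t)) in EF, EG by lia.
        rewrite (E3 K thTs thCs thT (S t)) in EG by lia.
        rewrite (sumR_ext (fun i => pmf K thTs i * survm K thCs i / survm K thC i) (pmf K thTs)) in EF.
        2:{ intros i Hi. unfold survm. destruct (IH ltac:(lia) (i-1)%nat ltac:(lia)) as [_ ->].
            field. apply Rgt_not_eq. apply svC. lia. }
        fold (cdf K thTs (S t)) in EF.
        cbn [sumR] in EG.
        rewrite (sumR_ext (fun j => pmf K thCs j * surv K thTs j / surv K thT j) (pmf K thCs)) in EG.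
        2:{ intros i Hi. unfold surv. destruct (IH ltac:(lia) i ltac:(lia)) as [-> _].
            field. apply Rgt_not_eq. apply svT. lia. }
        fold (cdf K thCs t) in EG.
        assert (x0 := svT' (S t) ltac:(lia)). assert (y0 := svC' (S t) ltac:(lia)).
        assert (a0 := svT (S t) ltac:(lia)). assert (b0 := svC (S t) ltac:(lia)).
        assert (g0 : 0 < pmf K thCs (S t)) by (apply HpC; lia).
        assert (c0 : 0 <= cdf K thCs t) by (apply sumR_nonneg; intros; left; apply HpC; lia).
        assert (a1 : 0 < cdf K thTs (S t)) by (apply sumR_pos; [intros; apply HpT; lia| lia]).
        unfold surv in *. rewrite (cdf_S K thCs t) in *.
        apply alg; auto; lra. }
    intros t Ht.
    destruct (Main t ltac:(lia) t ltac:(lia)) as [A1 A2].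
    destruct (Main t ltac:(lia) (t-1)%nat ltac:(lia)) as [B1 B2].
    rewrite !cdf_lt in A1, A2, B1, B2 by lia.
    rewrite <- (sumR_pred thT t), <- (sumR_pred thTs t) in A1 by lia.
    rewrite <- (sumR_pred thC t), <- (sumR_pred thCs t) in A2 by lia.
    split; lra.
Qed.
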